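(* Let $n\ge2$ and let $G_n$ be the $n$-gonal poset. Then $G_n$ is retractable to the 2-chain $C_2$ by an $(n-1)$-fence-reflection, followed by a retraction of the singleton-symmetry if $n$ is even: for an $(n-1)$-fence $F$, $G_n\oslash F\cong C_2$ if $n$ is odd, and $(G_n\oslash F)\oslash C_1\cong C_2$ if $n$ is even, where $C_1$ is the one-element poset.
   Context: $C_2=\{x<y\}$ is the 2-chain and $C_1$ the singleton poset. An $m$-fence is a poset of elements $a_1,\dots,a_m$ with order generated by alternating relations $a_1<a_2>a_3<\cdots a_m$ (lower) or $a_1>a_2<a_3>\cdots a_m$ (upper). The $n$-gonal poset $G_n$ ($n\ge2$) is the $2n$-fence $a_1<a_2>a_3<\cdots<a_{2n}$ with the additional relation $a_{2n}>a_1$, making it cyclic (two layers: $a_{odd}$ minimal, $a_{even}$ maximal); it is the vertex–edge incidence poset of a regular $n$-gon. Notation: $\ell(X)$ is the cardinality of a longest chain. A subset $A$ of a poset $X$ is maximally ordered in $X$ if $|\{(a,b)\in A\times A:a<b\}|$ is maximal among subsets of $X$ of cardinality $|A|$. For $\sigma\in\mathrm{Aut}(P)$, $\Sigma(\sigma)=\{a:\sigma(a)\ne a\}$. For finite $Q$ and $r\ge2$: $\sigma$ is a $(Q,r)$-generator if there exist subsets $S_0,\dots,S_{r-1}\subset\Sigma(\sigma)$, each isomorphic to $Q$, which are smallest maximally ordered subsets of $\Sigma(\sigma)$ with $\sigma(S_i)=S_{(i+1)\bmod r}$, $\ell(S_i)=\ell(\Sigma(\sigma))$, $\bigcup_iS_i=\Sigma(\sigma)$;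 distinct $S_i,S_j$ are $(Q,r)$-symmetric subsets. Elements $a,b$ are $(Q,r,0)$-symmetric if $a=b$; $(Q,r,1)$-symmetric if there are $(Q,r)$-symmetric subsets $A,B$ with generator $\sigma$, $a\in A$, $b=\sigma^q(a)\in B$, $1\le q<r$; for $n\ge2$, $(Q,r,n)$-symmetric if not $(Q,r,j)$-symmetric for $j<n$ but there exist $c$, $j<n$ with $a$ $(Q,r,j)$-symmetric to $c$ and $c$ $(Q,r,n-j)$-symmetric to $b$; $(Q,r)$-symmetric if $(Q,r,n)$-symmetric for some $n\ge0$ (an equivalence relation). $P\oslash_rQ$ is the quotient poset of equivalence classes with $E\le F$ iff some $e\in E$, $f\in F$ satisfy $e\le f$; $P\oslash Q:=P\oslash_2Q$. Retractable to $\tilde P$ means obtained by such a sequence of quotients, with the result not isomorphic to $P$. *)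

(* Defs.v *)
From HB Require Import structures.
From mathcomp Require Import all_boot all_fingroup.
Set Implicit Arguments. Unset Strict Implicit. Unset Printing Implicit Defensive.

(* Quotients P (/)_r Q are only relational structures a priori, so no
   axioms are bundled; all concrete posets below are genuine posets. *)
Record fposet := FPoset { carrier :> finType; rle : rel carrier }.

Definition fiso (P Q : fposet) : Prop :=
  exists f : P -> Q, bijective f /\ forall x y, rle (f x) (f y) = rle x y.

Definition C1 : fposet := @FPoset unit (fun _ _ => true).
Definition C2 : fposet := @FPoset bool (fun x y => x ==> y).

(* m-fence on a_1..a_m, encoded as 0..m-1.
   lower (up = false):  a_1 < a_2 > a_3 < ...
   upper (up = true) :  a_1 > a_2 < a_3 > ...
   The order is generated by the covering relations; since they alternate,
   it is just reflexivity plus the covering relations. *)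
Definition fence_le (m : nat) (up : bool) (x y : 'I_m) : bool :=
  (x == y)
  || ((val y == (val x).+1) && (odd x == up))
  || ((val x == (val y).+1) && (odd y != up)).
Definition fence (m : nat) (up : bool) : fposet := @FPoset 'I_m (fence_le up).

(* n-gonal poset G_n: the 2n-fence a_1 < a_2 > ... < a_{2n} plus a_{2n} > a_1;
   a_{i+1} is encoded as i : 'I_(2n); even indices (a_odd) are minimal,
   odd indices (a_even) are maximal, and x < y iff x is minimal, y maximal
   and x, y are cyclically adjacent. *)
Definition gon_le (n : nat) (x y : 'I_(n.*2)) : bool :=
  (x == y)
  || [&& ~~ odd x, odd y &
        (val y == (val x).+1 %% n.*2) || (val x == (val y).+1 %% n.*2)].
Definition G (n : nat) : fposet := @FPoset 'I_(n.*2) (@gon_le n).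

Section Notions.
Variable P : fposet.

Definition rlt (x y : P) : bool := rle x y && (x != y).

Definition is_aut (s : {perm P}) : bool :=
  [forall x, forall y, rle (s x) (s y) == rle x y].

Definition Sigma (s : {perm P}) : {set P} := [set x | s x != x].

Definition is_chain (C : {set P}) : bool :=
  [forall x in C, forall y in C, rle x y || rle y x].

Definition ell (A : {set P}) : nat :=
  \max_(C : {set P} | (C \subset A) && is_chain C) #|C|.

Definition nordered (A : {set P}) : nat :=
  #|[set p : P * P | [&& p.1 \in A, p.2 \in A & rlt p.1 p.2]]|.

Definition maxordered (X A : {set P}) : bool :=
  (A \subset X) &&
  [forall B : {set P}, ((B \subset X) && (#|B| == #|A|)) ==> (nordered B <= nordered A)].

Definition sub_iso (A : {set P}) (Q : fposet) : bool :=
  [exists f : {ffun Q -> P},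
     [&& injectiveb f, f @: setT == A &
         [forall x, forall y, rle x y == rle (f x) (f y)]]].

Definition good_family (r : nat) (s : {perm P}) (S : {ffun 'I_r -> {set P}}) : bool :=
  [forall i, [&& S i \subset Sigma s, maxordered (Sigma s) (S i),
                 ell (S i) == ell (Sigma s) & s @: S i == S (ordS i)]]
  && (\bigcup_i S i == Sigma s).

Definition gen_witness (Q : fposet) (r : nat) (s : {perm P})
    (S : {ffun 'I_r -> {set P}}) : bool :=
  [&& 1 < r, is_aut s, good_family s S, [forall i, sub_iso (S i) Q] &
      [forall S' : {ffun 'I_r -> {set P}},
         good_family s S' ==> [forall i, forall j, #|S i| <= #|S' j|]]].

Definition is_generator (Q : fposet) (r : nat) (s : {perm P}) : bool :=
  [exists S : {ffun 'I_r -> {set P}}, gen_witness Q s S].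

Definition sym1 (Q : fposet) (r : nat) : rel P := fun a b =>
  [exists s : {perm P}, exists S : {ffun 'I_r -> {set P}},
     gen_witness Q s S &&
     [exists i, exists j, exists q : 'I_r,
        [&& S i != S j, a \in S i, b \in S j, 0 < val q & b == iter q s a]]].

(* (Q,r)-symmetry: union over n of (Q,r,n)-symmetry, i.e. the reflexive
   transitive closure of (Q,r,1)-symmetry (the paper proves it is an
   equivalence relation; we take its symmetric part to get the classes). *)
Definition qsym (Q : fposet) (r : nat) (a b : P) : bool :=
  connect (sym1 Q r) a b && connect (sym1 Q r) b a.

Definition symclass (Q : fposet) (r : nat) (a : P) : {set P} :=
  [set b | qsym Q r a b].

Definition qcarrier (Q : fposet) (r : nat) : finType :=
  {C : {set P} | [exists a, C == symclass Q r a]}.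

Definition quot (r : nat) (Q : fposet) : fposet :=
  @FPoset (qcarrier Q r)
    (fun E F => [exists e in val E, exists f in val F, rle e f]).

End Notions.

Arguments quot : clear implicits.

(* Main.v *)
Require Import Defs.
From mathcomp Require Import all_boot all_fingroup.
From mathcomp Require Import zify.
Set Implicit Arguments. Unset Strict Implicit. Unset Printing Implicit Defensive.

Section Generic.
Variable P : fposet.
Implicit Types (s : {perm P}) (A B C : {set P}).

Lemma autP s : is_aut s -> forall x y, rle (s x) (s y) = rle x y.
Proof. by move=> /forallP h x y; apply/eqP; move: (h x) => /forallP /(_ y). Qed.

Lemma chain_aut s C : is_aut s -> is_chain C -> is_chain (s @: C).
Proof.
move=> hs /forallP hc; apply/forallP => x; apply/implyP => /imsetP [a ha ->].
apply/forallP => y; apply/implyP => /imsetP [b hb ->]; rewrite !(autP hs).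
by move: (hc a); rewrite ha /= => /forallP /(_ b); rewrite hb.
Qed.

Lemma ell_ub A k : (forall C, C \subset A -> is_chain C -> #|C| <= k) -> ell A <= k.
Proof. by move=> h; apply/bigmax_leqP => C /andP [h1 h2]; apply: h. Qed.

Lemma ell_lb A C : C \subset A -> is_chain C -> #|C| <= ell A.
Proof. by move=> h1 h2; apply: leq_bigmax_cond; rewrite h1 h2. Qed.

Lemma ell_sub A B : A \subset B -> ell A <= ell B.
Proof. by move=> hAB; apply: ell_ub => C hC hch; apply: ell_lb => //; apply: subset_trans hAB. Qed.

Lemma ell_aut s A : is_aut s -> ell A <= ell (s @: A).
Proof.
move=> hs; apply: ell_ub => C hC hch; rewrite -(card_imset C (@perm_inj _ s)).
by apply: ell_lb; [rewrite imsetS | rewrite chain_aut].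
Qed.

Lemma ell0 : ell (set0 : {set P}) = 0.
Proof. by apply/eqP; rewrite -leqn0; apply: ell_ub => C; rewrite subset0 => /eqP ->; rewrite cards0. Qed.

Definition pairs A := [set p : P * P | [&& p.1 \in A, p.2 \in A & rlt p.1 p.2]].
Lemma norderedE A : nordered A = #|pairs A|. Proof. by []. Qed.

Lemma nordered_aut s A : is_aut s -> nordered A <= nordered (s @: A).
Proof.
move=> hs; rewrite !norderedE.
have inj : injective (fun p : P * P => (s p.1, s p.2)).
  by move=> [a b] [c d] /= [] /perm_inj -> /perm_inj ->.
rewrite -(card_imset _ inj); apply: subset_leq_card; apply/subsetP => p /imsetP [[a b]].
rewrite inE /= => /and3P [ha hb /andP [hab hne]] ->; rewrite inE /= !imset_f //.
by rewrite /rlt (autP hs) hab (inj_eq perm_inj).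
Qed.

Lemma nordered_le1 A : #|A| <= 1 -> nordered A = 0.
Proof.
move=> /card_le1_eqP h; apply/eqP; rewrite norderedE cards_eq0; apply/eqP/setP => p.
rewrite !inE; apply/negP => /and3P [h1 h2 /andP [_ hne]].
by move: hne; rewrite (h _ _ h1 h2) eqxx.
Qed.

Lemma sub_iso_aut s A (Q : fposet) : is_aut s -> sub_iso A Q -> sub_iso (s @: A) Q.
Proof.
move=> hs /existsP [f /and3P [/injectiveP hi /eqP hA /forallP hr]].
apply/existsP; exists [ffun x => s (f x)]; apply/and3P; split.
- by apply/injectiveP => x y; rewrite !ffunE => /perm_inj /hi.
- apply/eqP; rewrite -hA -imset_comp; apply: eq_imset => x; by rewrite /= ffunE.
- apply/forallP => x; apply/forallP => y; rewrite !ffunE (autP hs).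
  by move: (hr x) => /forallP /(_ y).
Qed.

Section Lev.
Variable lev : P -> bool.
Hypothesis Hle : forall x y, rle x y -> (x == y) || (~~ lev x && lev y).
Hypothesis Hdown : forall x, lev x -> exists y, (y != x) && rle y x.

Lemma lev_aut s : is_aut s -> forall x, lev (s x) = lev x.
Proof.
move=> hs.
have key x : lev x = [exists y, (y != x) && rle y x].
  apply/idP/existsP => [/Hdown //|[y /andP [hne /Hle]]].
  by rewrite (negbTE hne) /= => /andP [].
move=> x; rewrite !key; apply/existsP/existsP => [[y /andP [hne hr]]|[y /andP [hne hr]]].
- exists (s^-1 y)%g; rewrite -(autP hs) permKV hr andbT.
  by apply: contra hne => /eqP <-; rewrite permKV.
- exists (s y); rewrite (autP hs) hr andbT (inj_eq perm_inj) //.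
Qed.

Lemma sym1_lev (Q : fposet) r a b : sym1 Q r a b -> lev a = lev b.
Proof.
case/existsP => s /existsP [S /andP [hw]].
case/existsP => i /existsP [j /existsP [q /and5P [_ _ _ _ /eqP ->]]].
case/and5P: hw => _ hs _ _ _.
elim: (nat_of_ord q) => //= k ->; by rewrite (lev_aut hs).
Qed.

Lemma connect_lev (Q : fposet) r a b : connect (sym1 Q r) a b -> lev a = lev b.
Proof.
move=> h; have := @closed_connect _ (sym1 Q r) (fun x => lev x) _ a b h.
by apply => x y /sym1_lev.
Qed.

Lemma quot_levels (Q : fposet) r :
  (forall x : P, rle x x) ->
  (exists x0 y0 : P, [&& ~~ lev x0, lev y0 & rle x0 y0]) ->
  (forall x y, lev x = lev y -> connect (sym1 Q r) x y) ->
  fiso (quot P r Q) C2.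
Proof.
move=> Hrefl [x0 [y0 /and3P [hx0 hy0 hxy]]] Hconn.
pose cls (a : P) := symclass Q r a.
have hcls a b : (b \in cls a) = (lev b == lev a).
  rewrite inE /qsym; apply/idP/idP => [/andP [h _]|/eqP e].
  - by rewrite (connect_lev h).
  - by rewrite !Hconn.
have hE (E : quot P r Q) : exists a, val E = cls a.
  by case: E => /= E /existsP [a /eqP ->]; exists a.
pose f (E : quot P r Q) : C2 := [exists x in val E, lev x].
have hf (E : quot P r Q) a : val E = cls a -> f E = lev a.
  move=> e; rewrite /f e; apply/existsP/idP => [[x /andP [hx hl]]|hl].
  - by move: hx; rewrite hcls hl => /eqP <-.
  - by exists a; rewrite hcls eqxx.
have p0 : [exists a, cls x0 == symclass Q r a] by apply/existsP; exists x0.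
have p1 : [exists a, cls y0 == symclass Q r a] by apply/existsP; exists y0.
pose g (b : C2) : quot P r Q := if b then exist _ (cls y0) p1 else exist _ (cls x0) p0.
exists f; split.
- exists g.
  + move=> E; case: (hE E) => a ea; rewrite (hf _ _ ea); apply: val_inj.
    rewrite ea /g; case hl: (lev a) => /=; apply/setP => z; rewrite !hcls hl.
    * by rewrite hy0.
    * by rewrite (negbTE hx0).
  + case; [by rewrite (hf _ y0) | by rewrite (hf _ x0) // (negbTE hx0)].
- move=> E F; case: (hE E) => a ea; case: (hE F) => b eb.
  rewrite (hf _ _ ea) (hf _ _ eb) /= ea eb.
  case ha: (lev a); case hb: (lev b) => /=.
  + by symmetry; apply/existsP; exists a; rewrite hcls eqxx /=; apply/existsP; exists a; rewrite hcls ha hb eqxx Hrefl.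
  + symmetry; apply/negbTE/negP => /existsP [e /andP [he /existsP [f' /andP [hf' /Hle]]]].
    move: he hf'; rewrite !hcls ha hb => /eqP he /eqP hf'.
    by case/orP => [/eqP ee|]; [move: he; rewrite ee hf' | rewrite he].
  + symmetry; apply/existsP; exists x0; rewrite hcls ha (negbTE hx0) /=.
    by apply/existsP; exists y0; rewrite hcls hb hy0.
  + by symmetry; apply/existsP; exists a; rewrite hcls eqxx /=; apply/existsP; exists a; rewrite hcls ha hb eqxx Hrefl.
Qed.
End Lev.
End Generic.

Section C1sec.
Variable P : fposet.
Variable lev : P -> bool.
Hypothesis Hfull : forall x y : P, rle x y = (x == y) || (~~ lev x && lev y).

Lemma tperm_sym1 (x y : P) : x != y -> lev x = lev y -> sym1 C1 2 x y.
Proof.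
move=> nxy exy.
pose s := tperm x y.
have hl a : lev (s a) = lev a by rewrite /s; case: tpermP => [->|->|] //.
have hs : is_aut s.
  apply/forallP => a; apply/forallP => b; apply/eqP.
  by rewrite !Hfull (inj_eq perm_inj) !hl.
pose S := [ffun i : 'I_2 => if val i == 0 then [set x] else [set y]].
have hSig : Sigma s = [set x; y].
  apply/setP => z; rewrite !inE /s; case: tpermP => [->|->|].
  - by rewrite eqxx eq_sym nxy.
  - by rewrite eqxx orbT nxy.
  - by move=> h1 h2; rewrite eqxx; apply/esym/norP; split; apply/eqP.
have incomp : ~~ rle x y && ~~ rle y x.
  by rewrite !Hfull exy andNb !orbF (eq_sym y) nxy.
have hch (C : {set P}) : C \subset [set x; y] -> is_chain C -> #|C| <= 1.
  move=> hC /forallP hc.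
  case hx: (x \in C); case hy: (y \in C).
  - move: (hc x); rewrite hx /= => /forallP /(_ y); rewrite hy /=.
    by case/andP: incomp => /negbTE -> /negbTE ->.
  - rewrite -(cards1 x); apply: subset_leq_card; apply/subsetP => z hz.
    move: (subsetP hC z hz); rewrite !inE => /orP [//|/eqP ez].
    by move: hz; rewrite ez hy.
  - rewrite -(cards1 y); apply: subset_leq_card; apply/subsetP => z hz.
    move: (subsetP hC z hz); rewrite !inE => /orP [/eqP ez|//].
    by move: hz; rewrite ez hx.
  - rewrite leqW // leqn0 cards_eq0; apply/eqP/setP => z; rewrite inE.
    apply/negbTE/negP => hz; move: (subsetP hC z hz); rewrite !inE.
    by case/orP => /eqP ez; move: hz; rewrite ez ?hx ?hy.
have chain1 (z : P) : is_chain [set z].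
  apply/forallP => a; apply/implyP; rewrite inE => /eqP ->.
  apply/forallP => b; apply/implyP; rewrite inE => /eqP ->.
  by rewrite Hfull eqxx.
have ellSig : ell (Sigma s) = 1.
  apply/eqP; rewrite eqn_leq; apply/andP; split.
  - by apply: ell_ub; rewrite hSig.
  - rewrite -(cards1 x); apply: ell_lb => //; rewrite hSig; apply/subsetP => z.
    by rewrite !inE => ->.
have ell1 (z : P) : z \in [set x; y] -> ell [set z] = 1.
  move=> hz; apply/eqP; rewrite eqn_leq; apply/andP; split.
  - apply: ell_ub => C hC hc; apply: hch hc; apply: subset_trans hC _.
    by apply/subsetP => w; rewrite inE => /eqP ->.
  - by rewrite -(cards1 z); apply: ell_lb.
have hS0 : S ord0 = [set x] by rewrite ffunE.
have hS1 : S ord_max = [set y] by rewrite ffunE.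
have hSi (i : 'I_2) : S i = [set x] \/ S i = [set y].
  by rewrite ffunE; case: ifP; [left|right].
have hgood : good_family s S.
  apply/andP; split.
  - apply/forallP => i; case: i => [[|[|//]] hi].
    + have -> : S (Ordinal hi) = [set x] by rewrite ffunE.
      rewrite hSig; apply/and4P; split.
      * by apply/subsetP => z; rewrite !inE => ->.
      * apply/andP; split; first by apply/subsetP => z; rewrite !inE => ->.
        apply/forallP => B; apply/implyP => /andP [_ /eqP hB].
        by rewrite nordered_le1 // hB cards1.
      * by rewrite -hSig ellSig ell1 // !inE eqxx.
      * rewrite ffunE imset_set1 /s tpermL.
        by have -> : ordS (Ordinal hi) = ord_max by apply: val_inj.
    + have -> : S (Ordinal hi) = [set y] by rewrite ffunE.
      rewrite hSig; apply/and4P; split.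
      * by apply/subsetP => z; rewrite !inE => ->; rewrite orbT.
      * apply/andP; split; first by apply/subsetP => z; rewrite !inE => ->; rewrite orbT.
        apply/forallP => B; apply/implyP => /andP [_ /eqP hB].
        by rewrite nordered_le1 // hB cards1.
      * by rewrite -hSig ellSig ell1 // !inE eqxx orbT.
      * rewrite ffunE imset_set1 /s tpermR.
        by have -> : ordS (Ordinal hi) = ord0 by apply: val_inj.
  - rewrite hSig; apply/eqP/setP => z; apply/bigcupP/idP.
    + case=> i _; case: (hSi i) => -> ; rewrite !inE => ->; by rewrite ?orbT.
    + rewrite !inE => /orP [] /eqP ->; [exists ord0; rewrite ?hS0 ?inE // | exists ord_max; rewrite ?hS1 ?inE //].
have hgw : gen_witness C1 s S.
  apply/and5P; split => //.
  - apply/forallP => i; case: (hSi i) => -> {i}; [set z := x | set z := y];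
    apply/existsP; exists [ffun _ => z]; apply/and3P; split.
    + by apply/injectiveP => [[] []].
    + apply/eqP/setP => w; rewrite inE; apply/imsetP/eqP => [[u _ ->]|->]; first by rewrite ffunE.
      by exists tt; rewrite ?ffunE.
    + by apply/forallP => -[]; apply/forallP => -[]; rewrite !ffunE Hfull eqxx.
    + by apply/injectiveP => [[] []].
    + apply/eqP/setP => w; rewrite inE; apply/imsetP/eqP => [[u _ ->]|->]; first by rewrite ffunE.
      by exists tt; rewrite ?ffunE.
    + by apply/forallP => -[]; apply/forallP => -[]; rewrite !ffunE Hfull eqxx.
  - apply/forallP => S'; apply/implyP => /andP [/forallP h1 _].
    apply/forallP => i; apply/forallP => j.
    have -> : #|S i| = 1 by case: (hSi i) => ->; rewrite cards1.
    case/and4P: (h1 j) => _ _ /eqP he _.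
    rewrite card_gt0; apply/negP => /eqP e; move: he; rewrite e ell0 ellSig //.
apply/existsP; exists s; apply/existsP; exists S; rewrite hgw /=.
apply/existsP; exists ord0; apply/existsP; exists ord_max; apply/existsP; exists ord_max.
rewrite hS0 hS1 !inE !eqxx /= /s tpermL eqxx !andbT.
apply/negP => /eqP e; have : x \in [set y] by rewrite -e inE.
by rewrite inE (negbTE nxy).
Qed.

Lemma quot_C1 : (exists x0 y0 : P, ~~ lev x0 && lev y0) -> fiso (quot P 2 C1) C2.
Proof.
move=> [x0 [y0 /andP [hx hy]]].
have Hle x y : rle x y -> (x == y) || (~~ lev x && lev y) by rewrite Hfull.
apply: (@quot_levels P lev Hle).
- move=> x hx'; exists x0; rewrite Hfull hx hx' orbT andbT.
  by apply: contraNneq hx => ->.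
- by move=> x; rewrite Hfull eqxx.
- by exists x0, y0; rewrite hx hy Hfull hx hy orbT.
- move=> x y e; case: (eqVneq x y) => [->|nxy]; first exact: connect0.
  by apply: connect1; apply: tperm_sym1.
Qed.
End C1sec.

Lemma modc (a N : nat) : a < N.*2 -> (a < N /\ a %% N = a) \/ (N <= a /\ a %% N = a - N).
Proof.
move=> h; case: (ltnP a N) => h2; [left; split=>//; exact: modn_small|right; split=>//].
by rewrite -{1}(subnK h2) modnDr modn_small // ltn_subLR // addnn.
Qed.

Lemma oddE m : odd m = (m %% 2 == 1).
Proof. by rewrite modn2; case: (odd m). Qed.

Ltac kill_mod N := repeat match goal with
 | |- context [?a %% N] =>
   lazymatch a with context [_ %% N] => fail | _ => idtac end;
   case: (@modc a N ltac:(lia)) => [[? ->]|[? ->]]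
 end.

Lemma bigcup2 (T : finType) (F : 'I_2 -> {set T}) : \bigcup_(i < 2) F i = F ord0 :|: F ord_max.
Proof.
apply/setP => z; apply/bigcupP/setUP => [[i _ hz]|[hz|hz]].
- case: i hz => [[|[|//]] hi] hz; [left|right].
  + by have <- : Ordinal hi = ord0 by apply: val_inj.
  + by have <- : Ordinal hi = ord_max by apply: val_inj.
- by exists ord0.
- by exists ord_max.
Qed.

Lemma ordS0 : ordS (ord0 : 'I_2) = ord_max. Proof. exact: val_inj. Qed.
Lemma ordS1 : ordS (ord_max : 'I_2) = ord0. Proof. exact: val_inj. Qed.

Section Gon.
Variable n : nat.
Hypothesis hn : 1 < n.
Local Notation N := n.*2.
Local Notation PG := (G n).

Ltac crunch := rewrite ?/gon_le ?/fence_le -?val_eqE /= ?oddE; kill_mod n.*2; lia.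

Lemma Npos : 0 < N. Proof. lia. Qed.

Lemma G_le (x y : PG) : rle x y -> (x == y) || (~~ odd x && odd y).
Proof. by case/orP => [->|/and3P [-> -> _]]; rewrite ?orbT. Qed.

Lemma G_down (x : PG) : odd x -> exists y : PG, (y != x) && rle y x.
Proof.
move=> ho; have hx := ltn_ord x.
have hy : x.-1 < N by lia.
exists (Ordinal hy); move: ho; rewrite /= /gon_le -!val_eqE /= !oddE.
kill_mod n.*2; lia.
Qed.

Section Refl.
Variable q : 'I_N.

Definition dq (x : 'I_N) : nat := (x + N - q) %% N.
Definition ofd (w : nat) : PG := Ordinal (ltn_pmod (q + w) Npos).

Lemma dq_lt x : dq x < N. Proof. exact: ltn_pmod _ Npos. Qed.

Lemma dq_ofd w : w < N -> dq (ofd w) = w.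
Proof. move=> hw; have hq := ltn_ord q; rewrite /dq /=; kill_mod n.*2; lia. Qed.

Lemma ofd_dq x : ofd (dq x) = x.
Proof. apply: val_inj; have hx := ltn_ord x; have hq := ltn_ord q; rewrite /dq /=; kill_mod n.*2; lia. Qed.

Lemma dq_inj : injective dq. Proof. exact: can_inj ofd_dq. Qed.

Lemma dq_odd x : odd (dq x) = (odd x != odd q).
Proof.
have hx := ltn_ord x; have hq := ltn_ord q; rewrite /dq.
case: (@modc (x + N - q) N ltac:(lia)) => [[? ->]|[? ->]]; rewrite !oddE; lia.
Qed.

Lemma adjD (x y : PG) : ((y : nat) == (x : nat).+1 %% N) = (dq y == (dq x).+1 %% N).
Proof. have hx := ltn_ord x; have hy := ltn_ord y; have hq := ltn_ord q; rewrite /dq; kill_mod n.*2; lia. Qed.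

Lemma gon_leD (x y : PG) : rle x y =
  (x == y) || [&& ~~ odd x, odd y & (dq y == (dq x).+1 %% N) || (dq x == (dq y).+1 %% N)].
Proof. by rewrite /= /gon_le !adjD. Qed.

Lemma gon_leD' (x y : PG) : @gon_le n x y =
  (x == y) || [&& ~~ odd x, odd y & (dq y == (dq x).+1 %% N) || (dq x == (dq y).+1 %% N)].
Proof. exact: gon_leD. Qed.

Lemma adjN (u v : nat) : u < N -> v < N ->
  (((N - v) %% N) == ((N - u) %% N).+1 %% N) = (u == v.+1 %% N).
Proof. move=> hu hv; kill_mod n.*2; lia. Qed.

Lemma oddN (u : nat) : u < N -> odd ((N - u) %% N) = odd u.
Proof. move=> hu; rewrite !oddE; kill_mod n.*2; lia. Qed.

Definition rf (x : PG) : PG := ofd ((N - dq x) %% N).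

Lemma dq_rf x : dq (rf x) = (N - dq x) %% N.
Proof. by rewrite dq_ofd // ltn_pmod // Npos. Qed.

Lemma rfK : involutive rf.
Proof. move=> x; apply: dq_inj; rewrite !dq_rf; have := dq_lt x; move: (dq x) => u hu; kill_mod n.*2; lia. Qed.

Lemma rf_inj : injective rf. Proof. exact: inv_inj rfK. Qed.

Lemma odd_rf x : odd (rf x) = odd x.
Proof.
have e (y : PG) : odd y = (odd (dq y) != odd q) by rewrite dq_odd; case: (odd y); case: (odd q).
by rewrite e dq_rf oddN ?dq_lt // -e.
Qed.

Definition rp : {perm PG} := perm rf_inj.
Lemma rpE x : rp x = rf x. Proof. by rewrite permE. Qed.

Lemma rp_aut : is_aut rp.
Proof.
apply/forallP => x; apply/forallP => y; rewrite !rpE !gon_leD !odd_rf (inj_eq rf_inj) !dq_rf.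
rewrite !adjN ?dq_lt //; apply/eqP; congr (_ || _); congr [&& _, _ & _]; apply: orbC.
Qed.

Definition SA : {set PG} := [set x | 0 < dq x < n].
Definition SB : {set PG} := [set x | n < dq x].

Lemma SigmaE : Sigma rp = SA :|: SB.
Proof.
apply/setP => x; rewrite !inE rpE -(inj_eq dq_inj) dq_rf.
have := dq_lt x; move: (dq x) => u hu; kill_mod n.*2; lia.
Qed.

Lemma SB_rf x : (x \in SB) = (rf x \in SA).
Proof. rewrite !inE dq_rf; have := dq_lt x; move: (dq x) => u hu; kill_mod n.*2; lia. Qed.

Lemma SA_rf x : (x \in SA) = (rf x \in SB).
Proof. by rewrite SB_rf rfK. Qed.

Lemma imset_inv (A B : {set PG}) : (forall x, (x \in B) = (rf x \in A)) -> rp @: A = B.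
Proof.
move=> h; apply/setP => x; apply/imsetP/idP => [[y hy ->]|hx].
- by rewrite h rpE rfK.
- by exists (rf x); [rewrite -h | rewrite rpE rfK].
Qed.

Lemma rpSA : rp @: SA = SB. Proof. exact: imset_inv SB_rf. Qed.
Lemma rpSB : rp @: SB = SA. Proof. exact: imset_inv SA_rf. Qed.

Lemma incompAB a b : a \in SA -> b \in SB -> ~~ rle a b && ~~ rle b a.
Proof.
rewrite !inE !gon_leD -!(inj_eq dq_inj); have := dq_lt a; have := dq_lt b.
move: (dq a) (dq b) => u v hv hu h1 h2.
have e1 : (u == v) = false by lia.
have e2 : (v == u) = false by lia.
have e3 : (v == u.+1 %% N) = false by kill_mod n.*2; lia.
have e4 : (u == v.+1 %% N) = false by kill_mod n.*2; lia.
by rewrite e1 e2 e3 e4 !andbF.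
Qed.

Lemma rlt_key (a b : PG) : a \in SA :|: SB -> b \in SA :|: SB -> rlt a b ->
  [/\ ~~ odd a, odd b & (dq b = (dq a).+1 \/ dq a = (dq b).+1)].
Proof.
rewrite !inE /rlt => ha hb /andP [hab hne].
have := G_le hab; rewrite (negbTE hne) /= => /andP [oa ob]; split => //.
move: hab; rewrite gon_leD (negbTE hne) oa ob /=.
move: ha hb; have := dq_lt a; have := dq_lt b; move: (dq a) (dq b) => u v hv hu ha hb.
case/orP => /eqP; kill_mod n.*2; lia.
Qed.

Lemma nord_bound (B : {set PG}) : B \subset SA :|: SB -> B != set0 -> nordered B < #|B|.
Proof.
move=> hB /set0Pn [m0 hm0].
case: (@arg_maxnP _ m0 (fun z => z \in B) dq hm0) => m hm hmax.
pose g (p : PG * PG) := if dq p.1 < dq p.2 then p.1 else p.2.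
have key p : p \in pairs B -> [/\ p.1 \in B, p.2 \in B, ~~ odd p.1, odd p.2 &
    (dq p.2 = (dq p.1).+1 \/ dq p.1 = (dq p.2).+1)].
  rewrite inE => /and3P [h1 h2 h3].
  by case: (rlt_key (subsetP hB _ h1) (subsetP hB _ h2) h3).
have ginj : {in pairs B &, injective g}.
  move=> [a b] [a' b'] /key [/= _ _ oa ob dab] /key [/= _ _ oa' ob' dab'].
  rewrite /g /=; case: ltnP => h1; case: ltnP => h2 e.
  - by subst; congr pair; apply: dq_inj; lia.
  - by move: oa; rewrite e ob'.
  - by move: oa'; rewrite -e ob.
  - by subst; congr pair; apply: dq_inj; lia.
have gsub : g @: pairs B \subset B :\ m.
  apply/subsetP => z /imsetP [[a b] /key [/= ha hb _ _ dab] ->].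
  rewrite /g /= !inE; case: ltnP => h.
  - rewrite ha andbT; apply/eqP => e; subst a.
    by have := hmax b hb; lia.
  - rewrite hb andbT; apply/eqP => e; subst b.
    by have := hmax a ha; lia.
rewrite norderedE -(card_in_imset ginj) (cardsD1 m B) hm add1n ltnS.
exact: subset_leq_card.
Qed.

Definition fN (i : nat) : PG := ofd i.+1.
Lemma dq_fN i : i.+1 < N -> dq (fN i) = i.+1. Proof. exact: dq_ofd. Qed.
Lemma odd_fN i : i.+1 < N -> odd (fN i) = (odd i == odd q).
Proof.
move=> h; have e (y : PG) : odd y = (odd (dq y) != odd q) by rewrite dq_odd; case: (odd y); case: (odd q).
by rewrite e dq_fN //=; case: (odd i); case: (odd q).
Qed.

Lemma fN_SA i : i < n.-1 -> fN i \in SA.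
Proof. move=> h; rewrite inE dq_fN; lia. Qed.

Lemma nord_lb : n.-2 <= nordered SA.
Proof.
pose h (i : 'I_(n.-2)) : PG * PG := if odd (fN i) then (fN i.+1, fN i) else (fN i, fN i.+1).
have hinj : injective h.
  move=> i j; have hi := ltn_ord i; have hj := ltn_ord j.
  rewrite /h; case: ifP => _; case: ifP => _ e;
  apply: val_inj; move: (congr1 (fun p => dq p.1) e) (congr1 (fun p => dq p.2) e) => /=;
  rewrite !dq_fN; lia.
have -> : n.-2 = #|h @: setT| by rewrite card_imset // cardsT card_ord.
rewrite norderedE; apply: subset_leq_card; apply/subsetP => p /imsetP [i _ ->].
have hi := ltn_ord i.
have o1 : odd (fN i.+1) = ~~ odd (fN i) by rewrite !odd_fN //=; lia.
rewrite /h inE /rlt; case: ifP => oi /=; rewrite !fN_SA //=; try lia.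
- rewrite gon_leD' -!(inj_eq dq_inj) !dq_fN; try lia.
  rewrite o1 oi /=; case: (@modc (i.+2) N ltac:(lia)) => [[_ ->]|[? _]]; lia.
- rewrite gon_leD' -!(inj_eq dq_inj) !dq_fN; try lia.
  rewrite o1 oi /=; case: (@modc (i.+2) N ltac:(lia)) => [[_ ->]|[? _]]; lia.
Qed.

Lemma fN_inj (i j : nat) : i.+1 < N -> j.+1 < N -> fN i = fN j -> i = j.
Proof. by move=> hi hj /(congr1 dq); rewrite !dq_fN // => -[]. Qed.

Lemma SA_sub_iso (up : bool) : up = ~~ odd q -> sub_iso SA (fence n.-1 up).
Proof.
move=> hup; apply/existsP; exists [ffun i : 'I_(n.-1) => fN i]; apply/and3P; split.
- apply/injectiveP => i j; have hi := ltn_ord i; have hj := ltn_ord j; rewrite !ffunE => /fN_inj e; apply: val_inj; apply: e; lia.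
- apply/eqP/setP => x; apply/imsetP/idP => [[i _ ->]|hx].
  + by rewrite ffunE fN_SA.
  + move: hx; rewrite inE => /andP [h1 h2].
    have hi : (dq x).-1 < n.-1 by lia.
    exists (Ordinal hi) => //; rewrite ffunE; apply: dq_inj; rewrite dq_fN /=; lia.
- apply/forallP => i; apply/forallP => j; rewrite !ffunE gon_leD -!(inj_eq dq_inj).
  have hi := ltn_ord i; have hj := ltn_ord j.
  rewrite !odd_fN ?dq_fN; try lia.
  rewrite !modn_small; try lia.
  rewrite /= /fence_le hup -val_eqE /= !oddE; lia.
Qed.

Lemma card_SA : #|SA| = n.-1.
Proof.
have /existsP [f /and3P [/injectiveP hi /eqP <- _]] := @SA_sub_iso (~~ odd q) erefl.
by rewrite card_imset // cardsT card_ord.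
Qed.

Lemma card_SB : #|SB| = n.-1.
Proof. by rewrite -rpSA card_imset ?card_SA //; apply: perm_inj. Qed.

Lemma SAB_disj : [disjoint SA & SB].
Proof. apply/pred0P => x /=; rewrite !inE; lia. Qed.

Lemma SA_Sig : SA \subset Sigma rp. Proof. by rewrite SigmaE subsetUl. Qed.
Lemma SB_Sig : SB \subset Sigma rp. Proof. by rewrite SigmaE subsetUr. Qed.

Lemma ellA : ell SA = ell (Sigma rp).
Proof.
apply/eqP; rewrite eqn_leq ell_sub ?SA_Sig //=; apply: ell_ub => C hC hch.
case: (boolP (C \subset SA)) => hCA; first exact: ell_lb.
case/subsetPn: hCA => b hbC hbA.
have hbB : b \in SB by move: (subsetP hC b hbC); rewrite SigmaE inE (negbTE hbA).
have hCB : C \subset SB.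
  apply/subsetP => c hc; move: (subsetP hC c hc); rewrite SigmaE inE => /orP [hcA|//].
  move/forallP: hch => /(_ c) /implyP /(_ hc) /forallP /(_ b) /implyP /(_ hbC).
  by case/andP: (incompAB hcA hbB) => /negbTE -> /negbTE ->.
rewrite -(card_imset C (@perm_inj _ rp)); apply: ell_lb; last exact: chain_aut rp_aut hch.
by rewrite -rpSB imsetS.
Qed.

Lemma ellB : ell SB = ell (Sigma rp).
Proof.
apply/eqP; rewrite eqn_leq ell_sub ?SB_Sig //= -ellA -rpSA; exact: ell_aut rp_aut.
Qed.

Lemma SA_n0 : SA != set0.
Proof. by rewrite -card_gt0 card_SA; lia. Qed.

Lemma maxA : maxordered (Sigma rp) SA.
Proof.
rewrite /maxordered SA_Sig /=; apply/forallP => B; apply/implyP => /andP [hB /eqP hc].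
have hB0 : B != set0 by rewrite -card_gt0 hc card_SA; lia.
have h1 := nord_bound (subset_trans hB _) hB0; rewrite -SigmaE in h1.
have h2 := nord_lb; move: (h1 (subxx _)); rewrite hc card_SA; lia.
Qed.

Lemma maxB : maxordered (Sigma rp) SB.
Proof.
rewrite /maxordered SB_Sig /=; apply/forallP => B; apply/implyP => /andP [hB /eqP hc].
have hB0 : B != set0 by rewrite -card_gt0 hc card_SB; lia.
have h1 := nord_bound (subset_trans hB _) hB0; rewrite -SigmaE in h1.
have h2 := nord_lb; have h3 := nordered_aut SA rp_aut; rewrite rpSA in h3.
move: (h1 (subxx _)); rewrite hc card_SB; lia.
Qed.

Section Gen.
Variable up : bool.
Hypothesis hup : up = ~~ odd q.

Definition SS : {ffun 'I_2 -> {set PG}} := [ffun i : 'I_2 => if val i == 0 then SA else SB].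
Lemma SS0 : SS ord0 = SA. Proof. by rewrite ffunE. Qed.
Lemma SS1 : SS ord_max = SB. Proof. by rewrite ffunE. Qed.
Lemma SSi i : SS i = SA \/ SS i = SB.
Proof. by rewrite ffunE; case: ifP; [left|right]. Qed.

Lemma good_SS : good_family rp SS.
Proof.
apply/andP; split.
- apply/forallP => i; case: i => [[|[|//]] hi].
  + have -> : Ordinal hi = ord0 by apply: val_inj.
    rewrite SS0 ordS0 SS1 SA_Sig maxA ellA rpSA !eqxx //.
  + have -> : Ordinal hi = ord_max by apply: val_inj.
    rewrite SS1 ordS1 SS0 SB_Sig maxB ellB rpSB !eqxx //.
- by rewrite bigcup2 SS0 SS1 SigmaE.
Qed.

Lemma gw_SS : gen_witness (fence n.-1 up) rp SS.
Proof.
apply/and5P; split => //.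
- exact: rp_aut.
- exact: good_SS.
- apply/forallP => i; case: (SSi i) => ->; first exact: SA_sub_iso.
  by rewrite -rpSA; apply: sub_iso_aut rp_aut (SA_sub_iso hup).
- apply/forallP => S'; apply/implyP => /andP [/forallP h1 /eqP hU].
  have e01 : rp @: S' ord0 = S' ord_max by case/and4P: (h1 ord0) => _ _ _ /eqP; rewrite ordS0.
  have e10 : rp @: S' ord_max = S' ord0 by case/and4P: (h1 ord_max) => _ _ _ /eqP; rewrite ordS1.
  have c01 : #|S' ord_max| = #|S' ord0| by rewrite -e01 card_imset //; apply: perm_inj.
  have hsig : #|Sigma rp| = n.-1 + n.-1.
    by rewrite SigmaE cardsU (disjoint_setI0 SAB_disj) cards0 subn0 card_SA card_SB.
  have hle : #|Sigma rp| <= #|S' ord0| + #|S' ord_max|.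
    by rewrite -hU bigcup2 cardsU leq_subr.
  apply/forallP => i; apply/forallP => j.
  have -> : #|SS i| = n.-1 by case: (SSi i) => ->; rewrite ?card_SA ?card_SB.
  have hj : #|S' j| = #|S' ord0|.
    by case: j => [[|[|//]] hj]; [congr #|S' _|; apply: val_inj | rewrite -c01; congr #|S' _|; apply: val_inj].
  rewrite hj; lia.
Qed.

Lemma refl_sym1 x : x \in SA :|: SB -> sym1 (fence n.-1 up) 2 x (rf x).
Proof.
move=> hx; apply/existsP; exists rp; apply/existsP; exists SS; rewrite gw_SS /=.
have hne : SS ord0 != SS ord_max.
  rewrite SS0 SS1; apply/negP => /eqP e; move: SA_n0.
  by rewrite -(setIid SA) {2}e (disjoint_setI0 SAB_disj) eqxx.
case/setUP: hx => hx.
- apply/existsP; exists ord0; apply/existsP; exists ord_max; apply/existsP; exists ord_max.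
  by rewrite hne SS0 SS1 -SA_rf hx /= rpE eqxx.
- apply/existsP; exists ord_max; apply/existsP; exists ord0; apply/existsP; exists ord_max.
  by rewrite eq_sym hne SS0 SS1 -SB_rf hx /= rpE eqxx.
Qed.
End Gen.

End Refl.

Definition x2 (x : PG) : PG := Ordinal (ltn_pmod (x.+2) Npos).
Definition xm2 (y : PG) : PG := Ordinal (ltn_pmod (y + N - 2) Npos).

Lemma x2_xm2 (y : PG) : x2 (xm2 y) = y.
Proof. apply: val_inj; rewrite /=; have := ltn_ord y; move: (nat_of_ord y) => u hu; kill_mod n.*2; lia. Qed.

Lemma dist_odd (x y : PG) k : (y + N - x) %% N = k.*2 -> odd y = odd x.
Proof. have := ltn_ord x; have := ltn_ord y; move: (nat_of_ord x) (nat_of_ord y) => u v hv hu; rewrite !oddE; kill_mod n.*2; lia. Qed.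

Lemma dist_xm2 (x y : PG) k : (y + N - x) %% N = k.+1.*2 -> (xm2 y + N - x) %% N = k.*2.
Proof. have := ltn_ord x; have := ltn_ord y; rewrite /=; move: (nat_of_ord x) (nat_of_ord y) => u v hv hu; kill_mod n.*2; lia. Qed.

Lemma dist0 (x y : PG) : (y + N - x) %% N = 0.*2 -> y = x.
Proof. have := ltn_ord x; have := ltn_ord y => hy hx h; apply: val_inj; rewrite /=; move: h; move: (nat_of_ord x) (nat_of_ord y) hx hy => u v hu hv; kill_mod n.*2; lia. Qed.

Lemma dist_even (x y : PG) : odd x = odd y -> odd ((y + N - x) %% N) = false.
Proof. have := ltn_ord x; have := ltn_ord y; move: (nat_of_ord x) (nat_of_ord y) => u v hv hu; rewrite !oddE; kill_mod n.*2; lia. Qed.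

Lemma conn_par (e : rel PG) p :
  (forall x : PG, odd x = p -> e x (x2 x) && e (x2 x) x) ->
  forall x y : PG, odd x = p -> odd y = p -> connect e x y.
Proof.
move=> he x y hx hy.
suff H : forall k (y' : PG), (y' + N - x) %% N = k.*2 -> connect e x y'.
  apply: (H ((y + N - x) %% N)./2); rewrite halfK dist_even ?subn0 //; by rewrite hx hy.
elim => [|k IH] y' hy'.
- by rewrite (dist0 hy'); exact: connect0.
- have hz := dist_xm2 hy'.
  apply: connect_trans (IH _ hz) _; apply: connect1.
  suff : e (xm2 y') (x2 (xm2 y')) by rewrite x2_xm2.
  have ho : odd (xm2 y') = p by rewrite (dist_odd hz).
  by case/andP: (he _ ho).
Qed.

Lemma step_gen (up : bool) (q : PG) (x : PG) : up = ~~ odd q ->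
  x \in SA q :|: SB q -> rf q x = x2 x ->
  sym1 (fence n.-1 up) 2 x (x2 x) && sym1 (fence n.-1 up) 2 (x2 x) x.
Proof.
move=> hup hx e; rewrite -e refl_sym1 //=.
have := refl_sym1 hup (x := rf q x); rewrite rfK; apply.
by case/setUP: hx => h; apply/setUP; [right; rewrite -SA_rf | left; rewrite -SB_rf].
Qed.

Lemma step_same (up : bool) (x : PG) : odd x = up ->
  sym1 (fence n.-1 up) 2 x (x2 x) && sym1 (fence n.-1 up) 2 (x2 x) x.
Proof.
move=> hxu; have bx := ltn_ord x.
pose q : PG := Ordinal (ltn_pmod (x.+1) Npos).
have d1 : dq q x = N.-1 by rewrite /dq /=; clear hxu; kill_mod n.*2; lia.
have d2 : dq q (x2 x) = 1 by rewrite /dq /=; clear hxu; kill_mod n.*2; lia.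
apply: (@step_gen up q).
- rewrite -hxu /= !oddE; clear hxu; kill_mod n.*2; lia.
- by rewrite !inE d1; lia.
- apply: (@dq_inj q); rewrite dq_rf d1 d2; kill_mod n.*2; lia.
Qed.

Lemma step_other (up : bool) (x : PG) : odd n -> odd x != up ->
  sym1 (fence n.-1 up) 2 x (x2 x) && sym1 (fence n.-1 up) 2 (x2 x) x.
Proof.
move=> hno hxu; have bx := ltn_ord x.
pose q : PG := Ordinal (ltn_pmod (x + 1 + n) Npos).
have hup : up = ~~ odd q.
  move: hxu hno; rewrite /= !oddE; case: up; kill_mod n.*2; lia.
have d1 : dq q x = n.-1 by rewrite /dq /=; clear hxu hup; kill_mod n.*2; lia.
have d2 : dq q (x2 x) = n.+1 by rewrite /dq /=; clear hxu hup; kill_mod n.*2; lia.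
apply: (@step_gen up q) => //.
- by rewrite !inE d1; lia.
- apply: (@dq_inj q); rewrite dq_rf d1 d2; kill_mod n.*2; lia.
Qed.

End Gon.

Lemma G_up n (x : G n) : ~~ odd x -> exists y : G n, rle x y && odd y.
Proof.
move=> ho; have hx := ltn_ord x.
have hy : x.+1 < n.*2 by move: ho; rewrite oddE; lia.
exists (Ordinal hy); move: ho; rewrite /= /gon_le -val_eqE /= (modn_small hy) !oddE; lia.
Qed.

Theorem mainTheorem9 (n : nat) (up : bool) : 2 <= n ->
  if odd n then fiso (quot (G n) 2 (fence n.-1 up)) C2
  else fiso (quot (quot (G n) 2 (fence n.-1 up)) 2 C1) C2.
Proof.
move=> hn.
set F := fence n.-1 up.
have Hle : forall x y : G n, rle x y -> (x == y) || (~~ odd x && odd y) := @G_le n.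
have Hdown : forall x : G n, odd x -> exists y : G n, (y != x) && rle y x := @G_down n hn.
have Hrefl : forall x : G n, rle x x by move=> x; rewrite /= /gon_le eqxx.
have h0 : 0 < n.*2 by lia.
have h1 : 1 < n.*2 by lia.
pose o0 : G n := Ordinal h0.
pose o1 : G n := Ordinal h1.
have h01 : rle o0 o1 by rewrite /= /gon_le -val_eqE /= (modn_small h1).
case: ifP => hodd.
- apply: (@quot_levels (G n) (fun x => odd x) Hle Hdown) => //.
  + by exists o0, o1; rewrite h01.
  + move=> x y e; apply: (@conn_par n hn _ (odd x)) => // z hz.
    case: (boolP (odd z == up)) => h; first exact: step_same (eqP h).
    exact: step_other hodd h.
- set P1 := quot (G n) 2 F.
  pose lev1 (E : P1) := [exists x in val E, odd x].
  have hconn_up (x y : G n) : odd x = up -> odd y = up -> connect (sym1 F 2) x y.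
    by apply: (@conn_par n hn _ up) => z hz; apply: step_same.
  have hcl (a b : G n) : b \in symclass F 2 a -> odd b = odd a.
    by rewrite inE => /andP [h _]; rewrite (connect_lev Hle Hdown h).
  have hself (a : G n) : a \in symclass F 2 a by rewrite inE /qsym connect0.
  have hfull (a : G n) : odd a = up -> symclass F 2 a = [set b : G n | odd b == up].
    move=> ha; apply/setP => b; rewrite !inE /qsym; apply/idP/idP.
    + by case/andP => h _; rewrite -(connect_lev Hle Hdown h) ha.
    + by move/eqP => hb; rewrite !hconn_up.
  have hsame (a b z : G n) : z \in symclass F 2 a -> z \in symclass F 2 b -> symclass F 2 a = symclass F 2 b.
    rewrite !inE /qsym => /andP [az za] /andP [bz zb]; apply/setP => w; rewrite !inE /qsym.
    apply/idP/idP => /andP [h1' h2'].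
    + by rewrite (connect_trans (connect_trans bz za) h1') (connect_trans h2' (connect_trans az zb)).
    + by rewrite (connect_trans (connect_trans az zb) h1') (connect_trans h2' (connect_trans bz za)).
  have hE (E : P1) : exists a, val E = symclass F 2 a.
    by case: E => /= E /existsP [a /eqP ->]; exists a.
  have hlev (E : P1) (a : G n) : val E = symclass F 2 a -> lev1 E = odd a.
    move=> e; rewrite /lev1 e; apply/existsP/idP => [[x /andP [hx ho]]|ho].
    + by rewrite -(hcl _ _ hx).
    + by exists a; rewrite hself.
  have Hfull (E E' : P1) : rle E E' = (E == E') || (~~ lev1 E && lev1 E').
    case: (hE E) => a ea; case: (hE E') => b eb; rewrite (hlev _ _ ea) (hlev _ _ eb) /= ea eb.
    apply/idP/idP.
    + case/existsP => e /andP [he /existsP [f /andP [hf hef]]].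
      case/orP: (Hle _ _ hef) => [/eqP ee | /andP [oe ofb]].
      * subst f; apply/orP; left; apply/eqP/val_inj; rewrite ea eb; exact: hsame he hf.
      * by rewrite -(hcl _ _ he) -(hcl _ _ hf) oe ofb orbT.
    + case/orP => [/eqP ee | /andP [oa ob]].
      * subst E'; move: eb; rewrite ea => eb; apply/existsP; exists a; rewrite hself /=.
        by apply/existsP; exists a; rewrite -eb hself; apply: Hrefl.
      * case: (boolP up) => hu.
        - have fb : symclass F 2 b = [set z : G n | odd z == up] by apply: hfull; rewrite ob hu.
          case: (G_up oa) => y /andP [hay oy].
          apply/existsP; exists a; rewrite hself /=; apply/existsP; exists y.
          by rewrite fb inE oy hu /=; apply: hay.
        - have fa : symclass F 2 a = [set z : G n | odd z == up] by apply: hfull; rewrite (negbTE oa) (negbTE hu).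
          case: (Hdown _ ob) => y /andP [hyb hyr].
          have oy : odd y = false by move: (Hle _ _ hyr); rewrite (negbTE hyb) /= => /andP [/negbTE].
          apply/existsP; exists y; rewrite fa inE oy (negbTE hu) /=; apply/existsP; exists b.
          by rewrite hself /=; apply: hyr.
  apply: (@quot_C1 P1 lev1 Hfull).
  have pf (a : G n) : [exists a0, symclass F 2 a == symclass F 2 a0] by apply/existsP; exists a.
  pose mk (a : G n) : P1 := exist _ (symclass F 2 a) (pf a).
  exists (mk o0), (mk o1); rewrite (hlev (mk o0) o0 erefl) (hlev (mk o1) o1 erefl) //.
Qed.
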